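(* Let $S$ be a multiplicatively closed subset of $R$ and $M$ an $R$-module. Consider: (a) $S^{-1}M$ satisfies the dual of Property $\mathcal{A}$ as an $R$-module; (b) $S^{-1}M$ satisfies the dual of Property $\mathcal{A}$ as an $S^{-1}R$-module; (c) $M$ satisfies the dual of Property $\mathcal{A}$ as an $R$-module. Then (a) and (b) are equivalent. If moreover $S\cap W_R(M)=\emptyset$ and $S\cap Z_R(M)=\emptyset$, then (a), (b), (c) are all equivalent.
   Context: All rings are commutative with identity. For an $R$-module $M$, $W_R(M)=\{r\in R : rM\neq M\}$ and $Z_R(M)=\{r\in R: rm=0 \text{ for some } 0\neq m\in M\}$. An $R$-module $M$ satisfies the dual of Property $\mathcal{A}$ if for every finitely generated ideal $I$ of $R$ with $I\subseteq W_R(M)$ we have $IM\neq M$. *)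

(* Defs.v *)
From HB Require Import structures.
From mathcomp Require Import all_boot all_order all_algebra.
Set Implicit Arguments. Unset Strict Implicit. Unset Printing Implicit Defensive.
Import Order.TTheory GRing.Theory.
Local Open Scope ring_scope.

(* Rings: commutative with identity (possibly trivial, since S^{-1}R is the
   zero ring when 0 \in S): comPzRingType.
   A module structure is given generically by a scalar action
   act : A -> N -> N on an additive group N (needed for viewing an
   S^{-1}R-module as an R-module by restriction of scalars). *)

Definition mult_closed (R : comPzRingType) (S : pred R) : Prop :=
  1 \in S /\ (forall s t, s \in S -> t \in S -> s * t \in S).

Definition ideal_gen (A : comPzRingType) (gs : seq A) (a : A) : Prop :=
  exists c : 'I_(size gs) -> A, a = \sum_(i < size gs) c i * gs`_i.

Definition Wset (A : comPzRingType) (N : zmodType) (act : A -> N -> N) (a : A)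
  : Prop := exists n : N, forall n' : N, act a n' <> n.

Definition Zset (A : comPzRingType) (N : zmodType) (act : A -> N -> N) (a : A)
  : Prop := exists n : N, n <> 0 /\ act a n = 0.

Definition in_IN (A : comPzRingType) (N : zmodType) (act : A -> N -> N)
  (I : A -> Prop) (n : N) : Prop :=
  exists ps : seq (A * N), (forall p, p \in ps -> I p.1) /\
    n = \sum_(p <- ps) act p.1 p.2.

Definition dualA (A : comPzRingType) (N : zmodType) (act : A -> N -> N) : Prop :=
  forall gs : seq A,
    (forall a, ideal_gen gs a -> Wset act a) ->
    exists n : N, ~ in_IN act (ideal_gen gs) n.

Definition is_ring_localization (R RS : comPzRingType) (S : pred R)
  (phi : R -> RS) : Prop :=
  [/\ (forall s, s \in S -> exists z, phi s * z = 1),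
      (forall y : RS, exists r s, s \in S /\ y * phi s = phi r)
    & (forall r, phi r = 0 -> exists2 s, s \in S & s * r = 0)].

Definition is_module_localization (R RS : comPzRingType) (S : pred R)
  (phi : R -> RS) (M : lmodType R) (N : lmodType RS) (f : M -> N) : Prop :=
  [/\ (forall m1 m2, f (m1 + m2) = f m1 + f m2),
      (forall r m, f (r *: m) = phi r *: f m),
      (forall n : N, exists m s, s \in S /\ phi s *: n = f m)
    & (forall m, f m = 0 -> exists2 s, s \in S & s *: m = 0)].

(* Main.v *)
Require Import Defs.
From HB Require Import structures.
From mathcomp Require Import all_boot all_order all_algebra.
From Stdlib Require Import Classical.
Import GRing.Theory.
Local Open Scope ring_scope.

Section Gen.
Variable A : comPzRingType.

Lemma ig0 (gs : seq A) : ideal_gen gs 0.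
Proof. by exists (fun _ => 0); rewrite big1 // => i _; rewrite mul0r. Qed.

Lemma igD (gs : seq A) a b : ideal_gen gs a -> ideal_gen gs b -> ideal_gen gs (a + b).
Proof.
move=> [c ->] [d ->]; exists (fun i => c i + d i).
by rewrite -big_split /=; apply: eq_bigr => i _; rewrite mulrDl.
Qed.

Lemma igM (gs : seq A) r a : ideal_gen gs a -> ideal_gen gs (r * a).
Proof.
move=> [c ->]; exists (fun i => r * c i).
by rewrite mulr_sumr; apply: eq_bigr => i _; rewrite mulrA.
Qed.

Lemma igg (gs : seq A) i : (i < size gs)%N -> ideal_gen gs gs`_i.
Proof.
move=> Hi; exists (fun j => ((val j == i) : bool)%:R).
rewrite (bigD1 (Ordinal Hi)) //= eqxx mul1r big1 ?addr0 // => j Hj.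
have -> : (val j == i) = false.
  by apply/negbTE; apply: contra Hj => /eqP e; apply/eqP/val_inj.
by rewrite mul0r.
Qed.

Lemma ig_ind (gs : seq A) (P : A -> Prop) :
  P 0 -> (forall x y, P x -> P y -> P (x + y)) ->
  (forall r i, (i < size gs)%N -> P (r * gs`_i)) ->
  forall a, ideal_gen gs a -> P a.
Proof.
move=> P0 PD Pg a [c ->]; apply: (big_ind P) => // i _; exact: Pg.
Qed.

Variable N : zmodType.
Variable act : A -> N -> N.

Lemma inIN0 I : in_IN act I 0.
Proof. by exists [::]; rewrite big_nil. Qed.

Lemma inIND I x y : in_IN act I x -> in_IN act I y -> in_IN act I (x + y).
Proof.
move=> [p1 [H1 ->]] [p2 [H2 ->]]; exists (p1 ++ p2); split; last by rewrite big_cat.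
by move=> p; rewrite mem_cat => /orP [/H1|/H2].
Qed.

Lemma inIN1 (I : A -> Prop) a m : I a -> in_IN act I (act a m).
Proof.
move=> Ia; exists [:: (a, m)]; split; last by rewrite big_seq1.
by move=> p; rewrite inE => /eqP ->.
Qed.

Lemma inIN_ind (I : A -> Prop) (P : N -> Prop) :
  P 0 -> (forall x y, P x -> P y -> P (x + y)) ->
  (forall a m, I a -> P (act a m)) ->
  forall n, in_IN act I n -> P n.
Proof.
move=> P0 PD P1 n [ps [Hps ->]]; elim: ps Hps => [|p ps IH] Hps.
  by rewrite big_nil.
rewrite big_cons; apply: PD.
  by apply: P1; apply: Hps; rewrite inE eqxx.
by apply: IH => q Hq; apply: Hps; rewrite inE Hq orbT.
Qed.

End Gen.

Lemma dualA_iso (A : comPzRingType) (M N : zmodType) (act1 : A -> M -> M)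
  (act2 : A -> N -> N) (f : M -> N) :
  (forall x y, f (x + y) = f x + f y) ->
  (forall a m, f (act1 a m) = act2 a (f m)) ->
  (forall x y, f x = f y -> x = y) ->
  (forall n, exists m, f m = n) ->
  dualA act1 <-> dualA act2.
Proof.
move=> fD fA fI fS.
have f0 : f 0 = 0.
  have h := fD 0 0; rewrite addr0 in h.
  by apply: (@addrI _ (f 0)); rewrite addr0 -h.
split.
- move=> H1 gs H2.
  have [|m Hm] := H1 gs.
    move=> a /H2 [n Hn]; have [m Hm] := fS n; exists m => m' E.
    by apply: (Hn (f m')); rewrite -fA E Hm.
  exists (f m) => Hin; apply: Hm.
  have := @inIN_ind _ _ act2 (ideal_gen gs)
    (fun n => forall m, f m = n -> in_IN act1 (ideal_gen gs) m).
  move=> /(_ _ _ _ (f m) Hin m erefl); apply.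
  + by move=> m0; rewrite -f0 => /fI ->; apply: inIN0.
  + move=> x y Hx Hy m0 E.
    have [mx Ex] := fS x; have [my Ey] := fS y.
    have -> : m0 = mx + my by apply: fI; rewrite fD Ex Ey.
    by apply: inIND; [apply: Hx | apply: Hy].
  + move=> a n' Ia m0 E; have [m' E'] := fS n'.
    have -> : m0 = act1 a m' by apply: fI; rewrite fA E'.
    exact: inIN1.
- move=> H2 gs H1.
  have [|n Hn] := H2 gs.
    move=> a /H1 [m Hm]; exists (f m) => n' E.
    have [m' E'] := fS n'; apply: (Hm m'); apply: fI; by rewrite fA E'.
  have [m Em] := fS n; exists m => Hin; apply: Hn; rewrite -Em.
  move: m Hin {Em}; apply: inIN_ind.
  + by rewrite f0; apply: inIN0.
  + by move=> x y Hx Hy; rewrite fD; apply: inIND.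
  + by move=> a m Ia; rewrite fA; apply: inIN1.
Qed.

Lemma Wunit (RS : comPzRingType) (N : lmodType RS) (y u z : RS) :
  u * z = 1 -> Wset (fun (y : RS) (n : N) => y *: n) (y * u) ->
  Wset (fun (y : RS) (n : N) => y *: n) y.
Proof.
move=> Huz [n Hn]; exists n => n' E; apply: (Hn (z *: n')).
by rewrite scalerA -mulrA Huz mulr1.
Qed.

Theorem corollary2p10 (R : comPzRingType) (S : pred R) (M : lmodType R)
  (RS : comPzRingType) (phi : {rmorphism R -> RS}) (N : lmodType RS)
  (f : M -> N) :
  mult_closed S ->
  is_ring_localization S phi ->
  is_module_localization S phi f ->
  (* (a) <-> (b) *)
  (dualA (fun (r : R) (n : N) => phi r *: n) <-> dualA (fun (y : RS) (n : N) => y *: n))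
  /\
  ((forall s, s \in S -> ~ Wset (fun (r : R) (m : M) => r *: m) s) ->
   (forall s, s \in S -> ~ Zset (fun (r : R) (m : M) => r *: m) s) ->
   (* (a) <-> (c) and (b) <-> (c) *)
   (dualA (fun (r : R) (n : N) => phi r *: n) <-> dualA (fun (r : R) (m : M) => r *: m))
   /\
   (dualA (fun (y : RS) (n : N) => y *: n) <-> dualA (fun (r : R) (m : M) => r *: m))).
Proof.
move=> [S1 SM] [Hu Hsurj Hker] [fD fZ fS fK].
have P1 : dualA (fun (r : R) (n : N) => phi r *: n) <-> dualA (fun (y : RS) (n : N) => y *: n).
  split.
  - move=> Ha gs H.
    have [hs [Hsz Hhs]] : exists hs : seq R, size hs = size gs /\
        forall i, (i < size gs)%N -> exists u v,
          phi hs`_i = u * gs`_i /\ gs`_i = v * phi hs`_i.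
      elim: gs {H} => [|g gs [hs [Hsz Hhs]]]; first by exists [::].
      have [r [s [Hs E]]] := Hsurj g; have [z Hz] := Hu s Hs.
      exists (r :: hs); split; first by rewrite /= Hsz.
      case=> [_|i] /=.
        exists (phi s), z; split; first by rewrite -E mulrC.
        by rewrite -E mulrC -mulrA Hz mulr1.
      exact: Hhs.
    have [|n Hn] := Ha hs.
      move=> a Ia.
      have : Wset (fun (y : RS) (n : N) => y *: n) (phi a) -> Wset (fun (r : R) (n : N) => phi r *: n) a by [].
      apply; apply: H; move: a Ia; apply: ig_ind.
      + by rewrite rmorph0; apply: ig0.
      + by move=> x y Hx Hy; rewrite rmorphD; apply: igD.
      + move=> r i; rewrite Hsz => Hi; have [u [v [E _]]] := Hhs i Hi.
        by rewrite rmorphM E mulrA; apply: igM; apply: igg.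
    exists n => Hin; apply: Hn; move: n Hin; apply: inIN_ind.
    + exact: inIN0.
    + by move=> x y; apply: inIND.
    + move=> a m Ia; move: a Ia m; apply: ig_ind.
      * by move=> m; rewrite scale0r; apply: inIN0.
      * by move=> x y Hx Hy m; rewrite scalerDl; apply: inIND.
      * move=> r i Hi m; have [u [v [_ E]]] := Hhs i Hi.
        rewrite E mulrA mulrC -scalerA.
        apply: (@inIN1 _ _ (fun (r : R) (n : N) => phi r *: n)).
        by apply: igg; rewrite Hsz.
  - move=> Hb gs H.
    have [|n Hn] := Hb (map phi gs).
      move=> y Hy.
      have [s [r [Hs [Ir E]]]] : exists s r, s \in S /\ ideal_gen gs r /\ y * phi s = phi r.
        move: y Hy; apply: ig_ind.
        + exists 1, 0; split=> //; split; first exact: ig0.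
          by rewrite rmorph0 mul0r.
        + move=> x y [s1 [r1 [Hs1 [Ir1 E1]]]] [s2 [r2 [Hs2 [Ir2 E2]]]].
          exists (s1 * s2), (r1 * s2 + r2 * s1); split; first exact: SM.
          split; first by apply: igD; rewrite mulrC; apply: igM.
          by rewrite rmorphM rmorphD !rmorphM mulrDl mulrA E1 mulrCA E2 (mulrC (phi s1)).
        + move=> c i; rewrite size_map => Hi; rewrite (nth_map 0) //.
          have [t [u [Hu' E]]] := Hsurj c.
          exists u, (t * gs`_i); split=> //; split; first by apply: igM; apply: igg.
          by rewrite rmorphM -E mulrAC.
      have [z Hz] := Hu s Hs.
      apply: (@Wunit RS N y (phi s) z Hz); rewrite E; exact: (H r Ir).
    exists n => Hin; apply: Hn; move: n Hin; apply: inIN_ind.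
    + exact: inIN0.
    + by move=> x y; apply: inIND.
    + move=> a m Ia.
      apply: (@inIN1 _ _ (fun (y : RS) (n : N) => y *: n)).
      move: a Ia; apply: ig_ind.
      * by rewrite rmorph0; apply: ig0.
      * by move=> x y Hx Hy; rewrite rmorphD; apply: igD.
      * move=> r i Hi; rewrite rmorphM; apply: igM.
        rewrite -(nth_map 0 0 phi Hi); apply: igg; by rewrite size_map.
split=> // HW HZ.
have fI : forall x y, f x = f y -> x = y.
  move=> x y Exy.
  have : f (x - y) + f y = 0 + f y by rewrite -fD subrK add0r.
  move/addIr => E0; have [s Hs Es] := fK _ E0.
  case: (eqVneq (x - y) 0) => [/eqP|nz]; first by rewrite subr_eq0 => /eqP.
  exfalso; apply: (HZ s Hs); exists (x - y); split=> //; exact/eqP.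
have fSu : forall n, exists m, f m = n.
  move=> n; have [m [s [Hs E]]] := fS n.
  have [m' Em] : exists m', s *: m' = m.
    apply: NNPP => Hn; apply: (HW s Hs); exists m => m' E'; apply: Hn; by exists m'.
  exists m'; have [z Hz] := Hu s Hs.
  have E2 : phi s *: n = phi s *: f m' by rewrite E -Em fZ.
  by rewrite -[n]scale1r -Hz mulrC -scalerA E2 scalerA mulrC Hz scale1r.
have iso := @dualA_iso R M N (fun r m => r *: m) (fun r n => phi r *: n) f fD fZ fI fSu.
split; first by split; [move/iso | move/iso].
by rewrite -P1; split; [move/iso | move/iso].
Qed.
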